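(* Let $S$ be a surface, $\phi:S\to\mathbf{Ein}^{1,1}$ an immersion with $\phi^*\tau$ trivial, $g$ a Lorentz metric on $S$ compatible with the induced split structure, and $(u_t)_{t}$ a smooth family of functions on $S$ with $u_0=0$; set $u=\frac{\mathrm d}{\mathrm dt}\big|_{t=0}u_t$. Let $\sigma_t$ be the isotropic surface associated with $g_t=e^{2u_t}g$ (so that $\sigma_t=e^{u_t}\sigma_0$) and $\eta_t$ its dual isotropic surface; write $\sigma=\sigma_0,\eta=\eta_0$ and dots for $t$-derivatives at $t=0$. Then $$\dot\sigma=u\,\sigma,\qquad \dot\eta=-u\,\eta-\mathrm D_{\nabla^gu}\sigma,$$ where $\nabla^gu$ is the $g$-gradient of $u$, i.e. the vector field with $g(\nabla^gu,\cdot)=\mathrm du$.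
   Context: $W$ is a real $4$-dimensional vector space with a quadratic form of signature $(2,2)$ and polar form $\langle\cdot,\cdot\rangle$; $\mathbf{Ein}^{1,1}\subset\mathbf P(W)$ is the isotropic quadric with tautological line bundle $\tau$ and canonical split structure (fibers of the two projections under a Segre identification with $\mathbf{RP}^1\times\mathbf{RP}^1$). The isotropic surface associated with a compatible metric $h$ is the (unique up to sign) map $\sigma:S\to W$ with $\langle\sigma,\sigma\rangle=0$, $[\sigma]=\phi$, and $h(X,Y)=\langle\mathrm D_X\sigma,\mathrm D_Y\sigma\rangle$. Its dual isotropic surface is the map $\eta$ with $\langle\eta,\sigma\rangle=1$, $\langle\eta,\eta\rangle=0$, $\langle\eta,\mathrm D_X\sigma\rangle=0$ for all tangent $X$. *)

(* Defs.v *)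
From HB Require Import structures.
From mathcomp Require Import all_boot all_order all_algebra.
From mathcomp Require Import all_classical all_reals all_analysis.
Set Implicit Arguments. Unset Strict Implicit. Unset Printing Implicit Defensive.
Import Order.TTheory GRing.Theory Num.Theory.
Import numFieldNormedType.Exports.
Local Open Scope ring_scope.
Local Open Scope classical_set_scope.

Definition bil {R : realType} (Q : 'M[R]_4) (x y : 'rV[R]_4) : R :=
  (x *m Q *m y^T) 0 0.

Definition sig22 {R : realType} (Q : 'M[R]_4) : Prop :=
  exists P : 'M[R]_4, P \in unitmx /\
    P *m Q *m P^T = diag_mx (\row_(i < 4) (if (i < 2)%N then 1 else -1)).

Fixpoint iterD {R : realType} {V W : normedModType R} (vs : seq V) (f : V -> W)
  : V -> W :=
  match vs with
  | [::] => f
  | v :: vs' => fun x => 'D_v (iterD vs' f) x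
  end.

Definition smooth_on {R : realType} {V W : normedModType R} (A : set V)
  (f : V -> W) : Prop :=
  forall (vs : seq V) (x : V), A x ->
    {for x, continuous (iterD vs f)} /\ (forall v : V, derivable (iterD vs f) x v).

Definition induced_metric {R : realType} (Q : 'M[R]_4) (sigma : 'rV[R]_2 -> 'rV[R]_4)
  (p X Y : 'rV[R]_2) : R := bil Q ('D_X sigma p) ('D_Y sigma p).

Definition lorentzian {R : realType} (g : 'rV[R]_2 -> 'rV[R]_2 -> R) : Prop :=
  exists e1 e2 : 'rV[R]_2,
    g e1 e1 = 1 /\ g e2 e2 = -1 /\ g e1 e2 = 0 /\ g e2 e1 = 0 /\
    (forall a b : R, a *: e1 + b *: e2 = 0 -> a = 0 /\ b = 0).

Definition dual_at {R : realType} (Q : 'M[R]_4) (sigma : 'rV[R]_2 -> 'rV[R]_4)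
  (e : 'rV[R]_4) (p : 'rV[R]_2) : Prop :=
  bil Q e (sigma p) = 1 /\ bil Q e e = 0 /\
  (forall X : 'rV[R]_2, bil Q e ('D_X sigma p) = 0).

(* Main.v *)
Require Import Defs.
From HB Require Import structures.
From mathcomp Require Import all_boot all_order all_algebra.
From mathcomp Require Import all_classical all_reals all_analysis.
From mathcomp Require Import ring lra.
Import Order.TTheory GRing.Theory Num.Theory.
Import numFieldNormedType.Exports.
Local Open Scope ring_scope.
Local Open Scope classical_set_scope.


Lemma bilDl (R : realType) (Q : 'M[R]_4) x y z :
  bil Q (x + y) z = bil Q x z + bil Q y z.
Proof. by rewrite /bil !mulmxDl mxE. Qed.
Lemma bilDr (R : realType) (Q : 'M[R]_4) x y z :
  bil Q x (y + z) = bil Q x y + bil Q x z.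
Proof. by rewrite /bil linearD /= mulmxDr mxE. Qed.
Lemma bilZl (R : realType) (Q : 'M[R]_4) (k : R) x y :
  bil Q (k *: x) y = k * bil Q x y.
Proof. by rewrite /bil -!scalemxAl mxE. Qed.
Lemma bilZr (R : realType) (Q : 'M[R]_4) (k : R) x y :
  bil Q x (k *: y) = k * bil Q x y.
Proof. by rewrite /bil linearZ /= -scalemxAr mxE. Qed.
Lemma bilNl (R : realType) (Q : 'M[R]_4) x y :
  bil Q (- x) y = - bil Q x y.
Proof. by rewrite -scaleN1r bilZl mulN1r. Qed.
Lemma bilNr (R : realType) (Q : 'M[R]_4) x y :
  bil Q x (- y) = - bil Q x y.
Proof. by rewrite -scaleN1r bilZr mulN1r. Qed.
Lemma bilBl (R : realType) (Q : 'M[R]_4) x y z :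
  bil Q (x - y) z = bil Q x z - bil Q y z.
Proof. by rewrite bilDl bilNl. Qed.
Lemma bilBr (R : realType) (Q : 'M[R]_4) x y z :
  bil Q x (y - z) = bil Q x y - bil Q x z.
Proof. by rewrite bilDr bilNr. Qed.

Lemma sig22_sym (R : realType) (Q : 'M[R]_4) : sig22 Q -> Q^T = Q.
Proof.
move=> [P [Pu HP]].
have H : P *m Q^T *m P^T = P *m Q *m P^T.
  have E : (P *m Q *m P^T)^T = P *m Q^T *m P^T by rewrite !trmx_mul trmxK mulmxA.
  by rewrite -E HP tr_diag_mx.
have PTu : P^T \in unitmx by rewrite unitmx_tr.
have := congr1 (fun M => invmx P *m M *m invmx P^T) H.
by rewrite /= !mulmxA !mulVmx // !mul1mx -!mulmxA !mulmxV // !mulmx1.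
Qed.

Lemma bilC (R : realType) (Q : 'M[R]_4) (x y : 'rV[R]_4) : Q^T = Q -> bil Q x y = bil Q y x.
Proof.
move=> QT; rewrite /bil.
have -> : (x *m Q *m y^T) 0 0 = ((x *m Q *m y^T)^T) 0 0.
  by rewrite [RHS]mxE.
by rewrite !trmx_mul trmxK QT mulmxA.
Qed.

Lemma bil_entry (R : realType) (Q : 'M[R]_4) (x : 'rV[R]_4) (M : 'M[R]_4) j :
  (x *m Q *m M^T) 0 j = bil Q x (row j M).
Proof.
rewrite /bil.
have -> : (x *m Q *m M^T) 0 j = ((x *m Q *m M^T)^T) j 0 by rewrite [RHS]mxE.
rewrite trmx_mul trmxK.
have -> : (M *m (x *m Q)^T) j 0 = (row j (M *m (x *m Q)^T)) 0 0 by rewrite [RHS]mxE.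
rewrite row_mul.
have -> : (row j M *m (x *m Q)^T) 0 0 = ((row j M *m (x *m Q)^T)^T) 0 0 by rewrite [RHS]mxE.
by rewrite trmx_mul trmxK.
Qed.

Lemma frame_expand (R : realType) (Q : 'M[R]_4) (s a b n e : 'rV[R]_4) :
  Q^T = Q -> bil Q s s = 0 -> bil Q s a = 0 -> bil Q s b = 0 -> bil Q s n = 1 ->
  bil Q a a = 1 -> bil Q a b = 0 -> bil Q a n = 0 -> bil Q b b = -1 ->
  bil Q b n = 0 -> bil Q n n = 0 ->
  e = bil Q e n *: s + bil Q e a *: a - bil Q e b *: b + bil Q e s *: n.
Proof.
move=> QT ss sa sb sn aa ab an bb bn nn.
have as' : bil Q a s = 0 by rewrite bilC.
have bs : bil Q b s = 0 by rewrite bilC.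
have ns : bil Q n s = 1 by rewrite bilC.
have ba : bil Q b a = 0 by rewrite bilC.
have na : bil Q n a = 0 by rewrite bilC.
have nb : bil Q n b = 0 by rewrite bilC.
pose L := [:: s; a; b; n].
pose M : 'M[R]_4 := \matrix_(i < 4) nth 0 L i.
have rowM i : row i M = nth 0 L i by rewrite rowK.
pose G := M *m Q *m M^T.
have Gij i j : G i j = bil Q (nth 0 L i) (nth 0 L j).
  have -> : G i j = (row i G) 0 j by rewrite [RHS]mxE.
  by rewrite /G !row_mul bil_entry !rowM.
have GG : G *m G = 1%:M.
{   apply/matrixP => i j; rewrite !mxE !big_ord_recr big_ord0 /= !Gij.
  case: i => [[|[|[|[|i]]]] Hi] //=.
  all: case: j => [[|[|[|[|j]]]] Hj] //=.
  all: rewrite ?ss ?sa ?sb ?sn ?aa ?ab ?an ?bb ?bn ?nn ?as' ?bs ?ns ?ba ?na ?nb.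
  all: ring. }
have MU : (Q *m M^T *m G) *m M = 1%:M.
  apply: mulmx1C; rewrite -GG; rewrite /G !mulmxA; done.
set w := e - (bil Q e n *: s + bil Q e a *: a - bil Q e b *: b + bil Q e s *: n).
have w0 : w *m Q *m M^T = 0.
{   apply/rowP => j; rewrite bil_entry rowM mxE.
  case: j => [[|[|[|[|j]]]] Hj] //=.
  all: rewrite /w !(bilBl, bilDl, bilNl, bilZl);
  rewrite ?ss ?sa ?sb ?sn ?aa ?ab ?an ?bb ?bn ?nn ?as' ?bs ?ns ?ba ?na ?nb; ring. }
have : w = w *m ((Q *m M^T *m G) *m M) by rewrite MU mulmx1.
rewrite !mulmxA w0 !mul0mx => /eqP; rewrite subr_eq0 => /eqP.
by [].
Qed.


Lemma derive_line (R : realType) (V W : normedModType R) (f : V -> W) x v :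
  'D_v f x = 'D_1 (fun h : R => f (h *: v + x)) 0.
Proof.
rewrite /derive.
suff -> : (fun h : R => h^-1 *: ((f \o shift x) (h *: v) - f x)) =
  (fun h : R => h^-1 *: (((fun h0 : R => f (h0 *: v + x)) \o shift 0) (h *: 1)
     - (fun h0 : R => f (h0 *: v + x)) 0)) by [].
apply: funext => h /=.
by rewrite ?addr0 scale0r add0r [_%:A]mulr1.
Qed.

Lemma is_deriveZfun (R : realType) (V W : normedModType R) (f : V -> R)
  (g : V -> W) x v :
  derivable f x v -> derivable g x v ->
  is_derive x v (fun y => f y *: g y) (f x *: 'D_v g x + 'D_v f x *: g x).
Proof.
move=> df dg.
have C : (fun h => h^-1 *: (((fun y => f y *: g y) \o shift x) (h *: v)
   - f x *: g x)) @ 0^' --> (f x *: 'D_v g x + 'D_v f x *: g x).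
  evar (fg : R -> W); rewrite [X in X @ _](_ : _ = fg) /=; last first.
    rewrite funeqE => h.
    have -> : f (h *: v + x) *: g (h *: v + x) - f x *: g x =
      f (h *: v + x) *: (g (h *: v + x) - g x) + (f (h *: v + x) - f x) *: g x.
      by rewrite scalerBr scalerBl addrA subrK.
    rewrite scalerDr scalerA mulrC -scalerA.
    by rewrite [_ *: (_ *: g x)]scalerA /fg.
  apply: cvgD; last exact: cvgZr_tmp df.
  apply: cvgZ => //=.
  suff : {for 0, continuous (fun h : R => f(h *: v + x))}.
    by move=> /continuous_withinNx; rewrite scale0r add0r.
  exact/differentiable_continuous/derivable1_diffP/(derivable1P _ _ _).1.
split; first by apply/cvg_ex; eexists; exact: C.
exact: cvg_lim C.
Qed.

Lemma is_derive_expR_dir (R : realType) (V : normedModType R) (g : V -> R) x v :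
  derivable g x v -> is_derive x v (fun y => expR (g y)) (expR (g x) * 'D_v g x).
Proof.
move=> dg.
have dg1 : is_derive (0:R) (1:R) (fun h : R => g (h *: v + x)) ('D_v g x).
  rewrite derive_line; apply: derivableP; exact/(derivable1P _ _ _).1.
have := @is_derive1_comp R expR (fun h : R => g (h *: v + x)) 0 _ _ (is_derive_expR _) dg1.
rewrite /= scale0r add0r => H.
split.
  apply/(derivable1P _ _ _).2; exact: (@ex_derive _ _ _ _ _ _ _ H).
by rewrite derive_line; exact: (@derive_val _ _ _ _ _ _ _ H).
Qed.


Lemma pair_t (R : realType) (H : R * 'rV[R]_2 -> R) (t : R) (x : 'rV[R]_2) :
  (derivable H (t, x) ((1:R), (0:'rV[R]_2)) <-> derivable (fun s => H (s, x)) t 1)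
  /\ 'D_((1:R), (0:'rV[R]_2)) H (t, x) = 'D_1 (fun s => H (s, x)) t.
Proof.
rewrite /derivable /derive.
suff -> : (fun h : R => h^-1 *: ((H \o shift (t, x)) (h *: ((1:R), (0:'rV[R]_2))) - H (t, x))) =
  (fun h : R => h^-1 *: (((fun s => H (s, x)) \o shift t) (h *: 1) - H (t, x))) by [].
apply: funext => h /=.
have -> : h *: ((1:R), (0:'rV[R]_2)) + (t, x) = (h%:A + t, x).
  by apply: injective_projections => /=; rewrite ?scaler0 ?add0r.
done.
Qed.


Lemma pair_x (R : realType) (H : R * 'rV[R]_2 -> R) (t : R) (x X : 'rV[R]_2) :
  (derivable H (t, x) ((0:R), X) <-> derivable (fun y => H (t, y)) x X)
  /\ 'D_((0:R), X) H (t, x) = 'D_X (fun y => H (t, y)) x.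
Proof.
rewrite /derivable /derive.
suff -> : (fun h : R => h^-1 *: ((H \o shift (t, x)) (h *: ((0:R), X)) - H (t, x))) =
  (fun h : R => h^-1 *: (((fun y => H (t, y)) \o shift x) (h *: X) - H (t, x))) by [].
apply: funext => h /=.
have -> : h *: ((0:R), X) + (t, x) = (t, h *: X + x).
  by apply: injective_projections => /=; rewrite ?scaler0 ?add0r.
done.
Qed.


Lemma MVT0 (R : realType) (f df : R -> R) (h : R) :
  (forall c, `|c| <= `|h| -> is_derive c (1:R) f (df c)) ->
  exists c, `|c| <= `|h| /\ f h - f 0 = df c * h.
Proof.
move=> D.
have [h0|h0] := leP 0 h.
- have cont : {within `[0, h], continuous f}.
    apply: derivable_within_continuous => c; rewrite in_itv /= => /andP [c0 ch].
    by apply: ex_derive; apply: D; rewrite !ger0_norm //; lra.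
  have [c cI E] : exists2 c, c \in `[0, h]%R & f h - f 0 = df c * (h - 0).
    apply: MVT_segment h0 _ cont => c; rewrite in_itv /= => /andP [c0 ch].
    by apply: D; rewrite !ger0_norm //; lra.
  exists c; split; last by rewrite E subr0.
  by move: cI; rewrite in_itv /= => /andP [c0 ch]; rewrite !ger0_norm //; lra.
- have h0' : h <= 0 by apply: ltW.
  have cont : {within `[h, 0], continuous f}.
    apply: derivable_within_continuous => c; rewrite in_itv /= => /andP [c0 ch].
    by apply: ex_derive; apply: D; rewrite !ler0_norm //; lra.
  have [c cI E] : exists2 c, c \in `[h, 0]%R & f 0 - f h = df c * (0 - h).
    apply: MVT_segment h0' _ cont => c; rewrite in_itv /= => /andP [c0 ch].
    by apply: D; rewrite !ler0_norm //; lra.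
  exists c; split.
    by move: cI; rewrite in_itv /= => /andP [c0 ch]; rewrite !ler0_norm //; lra.
  have -> : f h - f 0 = - (f 0 - f h) by rewrite opprB.
  by rewrite E sub0r mulrN opprK.
Qed.

Lemma line_is_derive (R : realType) (V : normedModType R) (F : V -> R) (y v : V) (c : R) :
  derivable F (y + c *: v) v ->
  is_derive c (1:R) (fun s : R => F (y + s *: v)) ('D_v F (y + c *: v)).
Proof.
have E : (fun h : R => h^-1 *: (((fun s : R => F (y + s *: v)) \o shift c) (h *: 1)
     - F (y + c *: v))) =
  (fun h : R => h^-1 *: ((F \o shift (y + c *: v)) (h *: v) - F (y + c *: v))).
  apply: funext => h /=.
  by rewrite [_%:A]mulr1 scalerDl addrCA addrA.
move=> d; split.
  by rewrite /derivable E.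
by rewrite /derive E.
Qed.

Lemma schwarz_lim (R : realType) (V : normedModType R) (A : set V) (F : V -> R)
  (x v w : V) : open A -> A x -> smooth_on A F ->
  (fun h : R => (F (x + h *: w + h *: v) - F (x + h *: v)
                 - (F (x + h *: w) - F x)) / (h * h))
    @ 0^' --> 'D_w ('D_v F) x.
Proof.
move=> oA Ax sF.
pose G := 'D_w ('D_v F).
have Gc : {for x, continuous G} := proj1 (sF [:: w; v] x Ax).
have dF : forall y, A y -> derivable F y v := fun y Ay => proj2 (sF [::] y Ay) v.
have dDF : forall y, A y -> derivable ('D_v F) y w :=
  fun y Ay => proj2 (sF [:: v] y Ay) w.
apply/cvgrPdist_lt => e e0.
have nA : \forall y \near x, A y /\ `|G x - G y| < e.
  apply: filterI.
    by apply: open_nbhs_nbhs; split.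
  by move: Gc => /cvgrPdist_lt /(_ e e0).
have [d d0 Hd] := (nbhs_normP _ _).1 nA.
pose K := `|v| + `|w| + 1.
have K0 : 0 < K by rewrite /K; have := normr_ge0 v; have := normr_ge0 w; lra.
rewrite near_withinE.
apply/nbhs_normP; exists (d / K); first by apply: divr_gt0.
move=> h /= hb hn0.
rewrite sub0r normrN in hb.
have hK : `|h| * K < d by rewrite -ltr_pdivlMr.
have inball s r : `|s| <= `|h| -> `|r| <= `|h| ->
    A (x + s *: v + r *: w) /\ `|G x - G (x + s *: v + r *: w)| < e.
  move=> sh rh; apply: Hd => /=.
  have -> : x - (x + s *: v + r *: w) = - (s *: v + r *: w).
    by rewrite opprD opprD addrA addrA subrr add0r opprD.
  rewrite normrN; apply: le_lt_trans (ler_normD _ _) _.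
  rewrite !normrZ.
  apply: le_lt_trans hK; rewrite /K mulrDr mulrDr mulr1.
  have h1 := ler_wpM2r (normr_ge0 v) sh.
  have h2 := ler_wpM2r (normr_ge0 w) rh.
  have h3 := normr_ge0 h.
  lra.
have dv s r : `|s| <= `|h| -> `|r| <= `|h| -> derivable F (x + s *: v + r *: w) v.
  by move=> sh rh; apply: dF; exact: (inball s r sh rh).1.
have n0 : `|(0:R)| <= `|h| by rewrite normr0.
have dv2 c : `|c| <= `|h| -> derivable F (x + h *: w + c *: v) v.
  by move=> ch; rewrite addrAC; apply: dv.
have dv1 c : `|c| <= `|h| -> derivable F (x + c *: v) v.
  by move=> ch; have := dv c 0 ch n0; rewrite scale0r addr0.
pose g := fun s : R => F (x + h *: w + s *: v) - F (x + s *: v).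
have [xi [xih Exi]] := @MVT0 R g
  (fun c => 'D_v F (x + h *: w + c *: v) - 'D_v F (x + c *: v)) h
  (fun c ch => @is_deriveB _ _ _ _ _ _ _ _ _
     (@line_is_derive R V F (x + h *: w) v c (dv2 c ch))
     (@line_is_derive R V F x v c (dv1 c ch))).
have dw c : `|c| <= `|h| -> derivable ('D_v F) (x + xi *: v + c *: w) w.
  by move=> ch; apply: dDF; exact: (inball xi c xih ch).1.
pose m := fun r : R => 'D_v F (x + xi *: v + r *: w).
have [et [eth Eet]] := @MVT0 R m (fun c => G (x + xi *: v + c *: w)) h
  (fun c ch => @line_is_derive R V ('D_v F) (x + xi *: v) w c (dw c ch)).
have num : F (x + h *: w + h *: v) - F (x + h *: v) - (F (x + h *: w) - F x)
    = G (x + xi *: v + et *: w) * h * h.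
  move: Exi; rewrite /g !scale0r !addr0 => ->.
  rewrite -Eet /m scale0r addr0 [x + h *: w + xi *: v]addrAC.
  done.
rewrite num -mulrA mulfK; last by rewrite mulf_neq0.
exact: (inball xi et xih eth).2.
Qed.

Lemma schwarz (R : realType) (V : normedModType R) (A : set V) (F : V -> R)
  (x v w : V) : open A -> A x -> smooth_on A F ->
  'D_v ('D_w F) x = 'D_w ('D_v F) x.
Proof.
move=> oA Ax sF.
have L1 := @schwarz_lim R V A F x v w oA Ax sF.
have L2 := @schwarz_lim R V A F x w v oA Ax sF.
have E : (fun h : R => (F (x + h *: w + h *: v) - F (x + h *: v)
                 - (F (x + h *: w) - F x)) / (h * h)) =
         (fun h : R => (F (x + h *: v + h *: w) - F (x + h *: w)
                 - (F (x + h *: v) - F x)) / (h * h)).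
  apply: funext => h; rewrite [x + h *: w + h *: v]addrAC; congr (_ / _); ring.
rewrite E in L1.
exact: (cvg_unique _ L2 L1).
Qed.


Lemma bilE (R : realType) (Q : 'M[R]_4) (x y : 'rV[R]_4) :
  bil Q x y = \sum_(j < 4) (\sum_(i < 4) x 0 i * Q i j) * y 0 j.
Proof. by rewrite /bil !mxE; apply: eq_bigr => j _; rewrite !mxE. Qed.

Lemma coord_cvg (R : realType) (T : Type) (F : set_system T) {FF : Filter F}
  (f : T -> 'rV[R]_4) (a : 'rV[R]_4) i :
  f @ F --> a -> (fun t => f t 0 i) @ F --> a 0 i.
Proof.
move=> Hf; apply: (cvg_comp f (fun M : 'rV[R]_4 => M 0 i) Hf); exact: coord_continuous.
Qed.

Lemma bil_cvg (R : realType) (Q : 'M[R]_4) (T : Type) (F : set_system T)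
  {FF : Filter F} (f g : T -> 'rV[R]_4) (a b : 'rV[R]_4) :
  f @ F --> a -> g @ F --> b ->
  (fun t => bil Q (f t) (g t)) @ F --> bil Q a b.
Proof.
move=> Hf Hg.
rewrite bilE; under eq_cvg do rewrite bilE.
apply: cvg_big => //; first exact: add_continuous.
move=> j _; apply: cvgM; last exact: coord_cvg.
apply: cvg_big => //; first exact: add_continuous.
move=> i _; apply: cvgMr_tmp; exact: coord_cvg.
Qed.

Lemma iso_orth (R : realType) (Q : 'M[R]_4) (U : set 'rV[R]_2)
  (sg : 'rV[R]_2 -> 'rV[R]_4) (p X : 'rV[R]_2) :
  Q^T = Q -> open U -> U p -> (forall q, U q -> bil Q (sg q) (sg q) = 0) ->
  derivable sg p X -> bil Q (sg p) ('D_X sg p) = 0.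
Proof.
move=> QT oU Up iso dX.
pose d := fun h : R => h^-1 *: (sg (h *: X + p) - sg p).
have dc : d @ 0^' --> 'D_X sg p := dX.
have lc : (fun h : R => h *: X + p) @ 0^' --> p.
  apply: cvg_within_filter.
  have H : (fun h : R => h *: X + p) @ (0:R) --> 0 *: X + p.
    apply: cvgD; [apply: cvgZr_tmp; exact: cvg_id | exact: cvg_cst].
  by move: H; rewrite scale0r add0r.
have kc : (fun h : R => sg (h *: X + p) + sg p) @ 0^' --> sg p + sg p.
  apply: cvgD; last exact: cvg_cst.
  suff : {for 0, continuous (fun h : R => sg (h *: X + p))}.
    by move=> /continuous_withinNx; rewrite scale0r add0r.
  exact/differentiable_continuous/derivable1_diffP/(derivable1P _ _ _).1.
have L := @bil_cvg R Q R _ _ _ _ _ _ dc kc.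
have nU : \forall h \near 0^', U (h *: X + p).
  by apply: lc; apply: open_nbhs_nbhs; split.
have nz : \forall h \near (0:R)^', h != 0 by exact: near_withinT.
have ev : {near 0^', (fun h => bil Q (d h) (sg (h *: X + p) + sg p)) =1 (fun _ : R => (0:R))}.
  apply: filterS2 nU nz => h Uh hn0 /=.
  rewrite /d bilZl bilBl !bilDr iso // iso // [bil Q (sg p) (sg (h *: X + p))]bilC //.
  by rewrite add0r addr0 subrr mulr0.
have L' : (fun _ : R => (0:R)) @ 0^' --> bil Q ('D_X sg p) (sg p + sg p).
  have H1 := near_eq_cvg ev. apply: (cvg_trans (H1 _) (L _)); typeclasses eauto.
have E0 : bil Q ('D_X sg p) (sg p + sg p) = 0.
  exact: (cvg_unique _ L' (cvg_cst 0)).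
move: E0; rewrite bilDr bilC // => /eqP; rewrite -mulr2n mulrn_eq0 /= => /eqP.
by [].
Qed.



Lemma open_prodX (R : realType) (T : set R) (U : set 'rV[R]_2) :
  open T -> open U -> open (T `*` U).
Proof.
move=> oT oU; rewrite openE => -[t x] [/= Tt Ux].
exists (T, U) => //=; split; by apply: open_nbhs_nbhs.
Qed.

Lemma LD (R : realType) (V W : normedModType R) (f g : V -> W) x v df dg :
  is_derive x v f df -> is_derive x v g dg ->
  is_derive x v (fun y => f y + g y) (df + dg).
Proof. move=> Hf Hg; exact: is_deriveD. Qed.

Lemma LB (R : realType) (V W : normedModType R) (f g : V -> W) x v df dg :
  is_derive x v f df -> is_derive x v g dg ->
  is_derive x v (fun y => f y - g y) (df - dg).
Proof. move=> Hf Hg; exact: is_deriveB. Qed.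

Lemma LM (R : realType) (V : normedModType R) (f g : V -> R) x v df dg :
  is_derive x v f df -> is_derive x v g dg ->
  is_derive x v (fun y => f y * g y) (f x * dg + g x * df).
Proof. move=> Hf Hg; exact: is_deriveM. Qed.

Lemma Lcst (R : realType) (V W : normedModType R) (k : W) (x v : V) :
  is_derive x v (fun _ => k) 0.
Proof. exact: is_derive_cst. Qed.

Lemma LZf (R : realType) (V W : normedModType R) (f : V -> R) (g : V -> W) x v df dg :
  is_derive x v f df -> is_derive x v g dg ->
  is_derive x v (fun y => f y *: g y) (f x *: dg + df *: g x).
Proof.
move=> [Hf <-] [Hg <-]; exact: is_deriveZfun.
Qed.

Lemma LZc (R : realType) (V W : normedModType R) (f : V -> R) (w : W) x v df :
  is_derive x v f df -> is_derive x v (fun y => f y *: w) (df *: w).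
Proof.
move=> Hf.
have := @LZf R V W f (fun _ => w) x v df 0 Hf (@Lcst R V W w x v).
by rewrite scaler0 add0r.
Qed.

Lemma LN (R : realType) (V W : normedModType R) (f : V -> W) x v df :
  is_derive x v f df -> is_derive x v (fun y => - f y) (- df).
Proof. move=> Hf; exact: is_deriveN. Qed.

Lemma Lq (R : realType) (f h : R -> R) (df dh : R) :
  is_derive (0:R) (1:R) f df -> is_derive (0:R) (1:R) h dh -> f 0 = 0 -> h 0 = 0 ->
  is_derive (0:R) (1:R) (fun t => (h t * h t - f t * f t) / 2) 0.
Proof.
move=> Hf Hh f0 h0.
have Hff := @LM R _ f f _ _ df df Hf Hf.
have Hhh := @LM R _ h h _ _ dh dh Hh Hh.
have HB := @LB R _ _ _ _ _ _ _ _ Hhh Hff.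
have HC : is_derive (0:R) (1:R) (fun _ : R => (2^-1 : R)) 0 := @Lcst R _ _ (2^-1 : R) _ _.
have H := @LM R _ _ _ _ _ _ _ HB HC.
move: H; rewrite f0 h0 !mul0r !addr0 subrr mulr0.
by rewrite mulr0 add0r.
Qed.


Theorem mainTheorem18 (R : realType) (Q : 'M[R]_4) (U : set 'rV[R]_2)
  (T : set R) (sigma : 'rV[R]_2 -> 'rV[R]_4) (u : R -> 'rV[R]_2 -> R)
  (eta : R -> 'rV[R]_2 -> 'rV[R]_4) :
  sig22 Q ->
  open U -> open T -> T 0 ->
  smooth_on U sigma ->
  (forall p, U p -> bil Q (sigma p) (sigma p) = 0) ->
  (forall p, U p -> lorentzian (induced_metric Q sigma p)) ->
  smooth_on (T `*` U) (fun q : R * 'rV[R]_2 => u q.1 q.2) ->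
  (forall p, U p -> u 0 p = 0) ->
  (forall t p, T t -> U p ->
     dual_at Q (fun x => expR (u t x) *: sigma x) (eta t p) p) ->
  let udot : 'rV[R]_2 -> R := fun p => 'D_1 (fun t => u t p) 0 in
  forall p, U p ->
    is_derive (0:R) (1:R) (fun t => expR (u t p) *: sigma p) (udot p *: sigma p) /\
    (forall G : 'rV[R]_2,
       (forall Y : 'rV[R]_2, induced_metric Q sigma p G Y = 'D_Y udot p) ->
       is_derive (0:R) (1:R) (fun t => eta t p) (- (udot p *: eta 0 p) - 'D_G sigma p)).
Proof.
move=> sQ oU oT T0 sS iso lor sU u0 dual udot p Up.
have QT := @sig22_sym R Q sQ.
pose Uf := fun q : R * 'rV[R]_2 => u q.1 q.2.
have TU : forall t x, T t -> U x -> (T `*` U) (t, x) by move=> t x Tt Ux; split.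
have dUf : forall t x v, T t -> U x -> derivable Uf (t, x) v :=
  fun t x v Tt Ux => proj2 (sU [::] (t, x) (TU t x Tt Ux)) v.
have dsig : forall x X, U x -> derivable sigma x X :=
  fun x X Ux => proj2 (sS [::] x Ux) X.
have du_t : forall t x, T t -> U x -> derivable (fun s => u s x) t 1 :=
  fun t x Tt Ux => (@pair_t R Uf t x).1.1 (dUf t x _ Tt Ux).
have du_x : forall t x X, T t -> U x -> derivable (u t) x X :=
  fun t x X Tt Ux => (@pair_x R Uf t x X).1.1 (dUf t x _ Tt Ux).
have dut : is_derive (0:R) (1:R) (fun t => u t p) (udot p) :=
  derivableP (du_t 0 p T0 Up).
have dexp : is_derive (0:R) (1:R) (fun t => expR (u t p)) (expR (u 0 p) * udot p).
  have := @is_derive_expR_dir R _ (fun t => u t p) 0 1 (du_t 0 p T0 Up).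
  by [].
split.
  have := @LZc R _ _ _ (sigma p) _ _ _ dexp.
  by rewrite u0 // expR0 mul1r.
move=> G HG.
have [e1 [e2 [h11 [h22 [h12 [h21 _]]]]]] := lor p Up.
rewrite /induced_metric in h11 h22 h12 HG.
have nU : \forall x \near p, U x by apply: open_nbhs_nbhs; split.
have f0E : forall X, 'D_X (fun x => expR (u 0 x) *: sigma x) p = 'D_X sigma p.
  move=> X; apply: near_eq_derive; apply: filterS nU => x Ux.
  by rewrite u0 // expR0 scale1r.
have Du0 : forall X, 'D_X (u 0) p = 0.
  move=> X.
  have -> : 'D_X (u 0) p = 'D_X (fun _ : 'rV[R]_2 => (0:R)) p.
    by apply: near_eq_derive; apply: filterS nU => x Ux; exact: u0.
  exact: derive_cst.
have [ns0 [nn nD]] := dual 0 p T0 Up.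
have ns : bil Q (eta 0 p) (sigma p) = 1.
  by move: ns0; rewrite u0 // expR0 scale1r.
have nDs : forall X, bil Q (eta 0 p) ('D_X sigma p) = 0.
  by move=> X; rewrite -f0E; exact: nD.
have sD : forall X, bil Q (sigma p) ('D_X sigma p) = 0 :=
  fun X => @iso_orth R Q U sigma p X QT oU Up iso (dsig p X Up).
have FE := fun e => @frame_expand R Q (sigma p) ('D_e1 sigma p) ('D_e2 sigma p)
  (eta 0 p) e QT (iso p Up) (sD e1) (sD e2) (etrans (bilC _ _ _ _ QT) ns)
  h11 h12 (etrans (bilC _ _ _ _ QT) (nDs e1)) h22 (etrans (bilC _ _ _ _ QT) (nDs e2)) nn.
pose E := fun t => expR (- u t p).
pose a := fun t => 'D_e1 (u t) p.
pose b := fun t => 'D_e2 (u t) p.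
pose g := fun t => ((b t * b t - a t * a t) / 2) *: sigma p - a t *: 'D_e1 sigma p
  + b t *: 'D_e2 sigma p + eta 0 p.
pose Phi := fun t => E t *: g t.
have etaF : forall t, T t -> eta t p = Phi t.
  move=> t Tt.
  have [es0 [ee eD0]] := dual t p Tt Up.
  have c0 : expR (u t p) != 0 by rewrite gt_eqF // expR_gt0.
  have es : bil Q (eta t p) (sigma p) = E t.
    move: es0; rewrite bilZr /E expRN => H.
    by rewrite -[bil Q _ _](mulKf c0) H mulr1.
  have eD : forall X, bil Q (eta t p) ('D_X sigma p) = - ('D_X (u t) p * E t).
    move=> X.
    have Dexp := @is_derive_expR_dir R _ (u t) p X (du_x t p X Tt Up).
    have Hf := @is_deriveZfun R _ _ (fun x => expR (u t x)) sigma p X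
      (@ex_derive _ _ _ _ _ _ _ Dexp) (dsig p X Up).
    move: (eD0 X); rewrite (@derive_val _ _ _ _ _ _ _ Hf) bilDr !bilZr.
    rewrite (@derive_val _ _ _ _ _ _ _ Dexp) es => /eqP.
    rewrite -mulrA -mulrDr mulf_eq0 (negbTE c0) /= addr_eq0 => /eqP.
    by [].
  have Ee := FE (eta t p).
  rewrite es (eD e1) (eD e2) in Ee.
  move: ee; rewrite Ee.
  set al := bil Q (eta t p) (eta 0 p).
  rewrite !(bilDl, bilDr, bilBl, bilBr, bilZl, bilZr, bilNl, bilNr).
  rewrite iso // !sD h11 h12 h22 nn ns !nDs.
  rewrite ![bil Q ('D_ _ sigma p) (sigma p)]bilC // !sD.
  rewrite ![bil Q ('D_ _ sigma p) (eta 0 p)]bilC // !nDs.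
  rewrite [bil Q ('D_e2 sigma p) ('D_e1 sigma p)]bilC // h12.
  rewrite [bil Q (sigma p) (eta 0 p)]bilC // ns => Hiso.
  have Et0 : E t != 0 by rewrite /E gt_eqF // expR_gt0.
  have H2 : E t * (2 * al - E t * (b t * b t - a t * a t)) = 0.
    by rewrite -Hiso /a /b; ring.
  move/eqP: H2; rewrite mulf_eq0 (negbTE Et0) /= subr_eq0 => /eqP H2.
  have alE : al = E t * ((b t * b t - a t * a t) / 2).
    by rewrite mulrA -H2; field.
  rewrite alE /Phi /g !scalerDr !scalerN !scalerA !scaleNr opprK.
  by congr (_ + - _ + _ + _); congr (_ *: _); exact: mulrC.
have TnA : \forall t \near (0:R), T t by apply: open_nbhs_nbhs; split.
apply: (@near_eq_is_derive R _ _ Phi).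
  by apply: filterS TnA => t Tt; rewrite etaF.
have dun : is_derive (0:R) (1:R) (fun t => - u t p) (- udot p) :=
  @LN R _ _ _ _ _ _ dut.
have dE : is_derive (0:R) (1:R) E (- udot p).
  have := @is_derive_expR_dir R _ (fun t => - u t p) 0 1 (@ex_derive _ _ _ _ _ _ _ dun).
  by rewrite (@derive_val _ _ _ _ _ _ _ dun) u0 // oppr0 expR0 mul1r.
have open_TU := @open_prodX R T U oT oU.
have sch : forall X, 'D_((1:R), (0:'rV[R]_2)) ('D_((0:R), X) Uf) (0, p) = 'D_X udot p.
  move=> X.
  rewrite (@schwarz R _ (T `*` U) Uf (0, p) (1, 0) (0, X) open_TU (TU 0 p T0 Up) sU).
  rewrite (@pair_x R ('D_((1:R), (0:'rV[R]_2)) Uf) 0 p X).2.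
  congr ('D_X _ p); apply: funext => y; exact: (@pair_t R Uf 0 y).2.
have dA : forall X, is_derive (0:R) (1:R) (fun t => 'D_X (u t) p) ('D_X udot p).
  move=> X.
  have dH : derivable ('D_((0:R), X) Uf) (0, p) ((1:R), (0:'rV[R]_2)) :=
    proj2 (sU [:: ((0:R), X)] (0, p) (TU 0 p T0 Up)) (1, 0).
  have [d1 d2] := @pair_t R ('D_((0:R), X) Uf) 0 p.
  rewrite -sch d2.
  have -> : (fun t => 'D_X (u t) p) = (fun s => 'D_((0:R), X) Uf (s, p)).
    apply: funext => s; exact: (esym (@pair_x R Uf s p X).2).
  exact: derivableP (d1.1 dH).
have da := dA e1.
have db := dA e2.
have dq : is_derive (0:R) (1:R) (fun t => (b t * b t - a t * a t) / 2) 0.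
  exact: (@Lq R a b _ _ da db (Du0 e1) (Du0 e2)).
have dg : is_derive (0:R) (1:R) g (0 *: sigma p - 'D_e1 udot p *: 'D_e1 sigma p
     + 'D_e2 udot p *: 'D_e2 sigma p + 0).
  rewrite /g; apply: LD.
  apply: LD; last exact: (@LZc R _ _ _ _ _ _ _ db).
  by apply: LB; [exact: (@LZc R _ _ _ _ _ _ _ dq) | exact: (@LZc R _ _ _ _ _ _ _ da)].
have dPhi := @LZf R _ _ E g _ _ _ _ dE dg.
rewrite /Phi; refine (is_derive_eq dPhi _).
have DG := FE ('D_G sigma p).
rewrite [bil Q _ (eta 0 p)]bilC // nDs HG HG [bil Q _ (sigma p)]bilC // sD in DG.
rewrite DG /E /g /a /b !Du0 u0 // oppr0 expR0 scale1r.
rewrite !mul0r subrr mul0r !scale0r !add0r !addr0 ?subr0 ?sub0r ?scaleNr.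
rewrite oppr0 add0r opprB [RHS]addrC; congr (_ + _); exact: addrC.
Qed.
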